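(* Let $X,Y$ be a section-pair with $m$ chords, and suppose that each vertex of $X$ is incident to at most one chord. Then either there is a family of $m/2$ pairwise-interlacing chords, or there are pairs of distinct chords $(e_i,e'_i)$, $e_i=(x_i,y_i)$, $e'_i=(x'_i,y'_i)$ (with $x_i,x'_i\in X$, $y_i,y'_i\in Y$), $i=1,\dots,t$, such that: (1) for every $1\le i\le t$, $e_i,e'_i$ are either parallel or share their vertex in $Y$ (i.e. $y_i=y'_i$); (2) for every $1\le i<j\le t$, both $e_i$ and $e'_i$ interlace both $e_j$ and $e'_j$; (3) $\sum_{i=1}^t d_X(x_i,x'_i)\ge m/4$.
   Context: A section-pair in a graph $G$ is a pair $X,Y$ of vertex-disjoint paths; the two endpoints of $X$ are designated its top $x^{t}$ and bottom $x^{b}$, and those of $Y$ its top $y^t$ and bottom $y^b$. For distinct $x_1,x_2\in X$, $x_1$ is above $x_2$ if $x_1$ is closer to $x^t$ along $X$ than $x_2$, otherwise below; similarly in $Y$. A chord is an edge of $G$ with one endpoint in $X$ and one in $Y$. For $x_1,x_2\in X$, $d_X(x_1,x_2)$ is the number of edges of the subpath of $X$ between $x_1$ and $x_2$. Two chords $(x_1,y_1),(x_2,y_2)$ ($x_i\in X,y_i\in Y$) with no common vertex are parallel if for some $i\in\{1,2\}$, $x_i$ is above $x_{3-i}$ and $y_i$ is above $y_{3-i}$; otherwise they are interlacing. *)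

(* Defs.v *)
From mathcomp Require Import all_boot.
Set Implicit Arguments. Unset Strict Implicit. Unset Printing Implicit Defensive.

Section SectionPair.
Variable T : finType.
Variable e : rel T.

Definition simple_graph := symmetric e /\ irreflexive e.

(* A path of G given as the list of its vertices from top to bottom:
   nonempty, no repeated vertex, consecutive vertices adjacent.
   The top is the head of the list, the bottom its last element. *)
Definition is_gpath (s : seq T) : bool :=
  if s is x :: p then path e x p && uniq s else false.

Definition section_pair (X Y : seq T) : Prop :=
  [/\ is_gpath X, is_gpath Y & [disjoint X & Y]].

Variables X Y : seq T.

(* Chords, represented as pairs (x, y) with x in X, y in Y (each chord is
   represented exactly once since X and Y are disjoint). *)
Definition chords : {set T * T} :=
  [set c | [&& c.1 \in X, c.2 \in Y & e c.1 c.2]].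

Definition aboveX (u v : T) : bool := index u X < index v X.
Definition aboveY (u v : T) : bool := index u Y < index v Y.

(* d_X(x1,x2): number of edges of the subpath of X between x1 and x2. *)
Definition dX (x1 x2 : T) : nat :=
  (index x1 X - index x2 X) + (index x2 X - index x1 X).

Definition no_common_vertex (c1 c2 : T * T) : bool :=
  [&& c1.1 != c2.1, c1.1 != c2.2, c1.2 != c2.1 & c1.2 != c2.2].

Definition parallel (c1 c2 : T * T) : bool :=
  no_common_vertex c1 c2 &&
  ((aboveX c1.1 c2.1 && aboveY c1.2 c2.2) ||
   (aboveX c2.1 c1.1 && aboveY c2.2 c1.2)).

Definition interlacing (c1 c2 : T * T) : bool :=
  no_common_vertex c1 c2 && ~~ parallel c1 c2.

End SectionPair.

(* Main.v *)
Require Import Defs.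
From mathcomp Require Import all_boot zify.
Set Implicit Arguments. Unset Strict Implicit.

Definition pX (T : eqType) (X : seq T) (c : T * T) := index c.1 X.
Definition qY (T : eqType) (Y : seq T) (c : T * T) := index c.2 Y.

Lemma chord_mem (T : finType) (e : rel T) X Y c :
  c \in chords e X Y -> [/\ c.1 \in X, c.2 \in Y & e c.1 c.2].
Proof. by rewrite inE => /and3P. Qed.

Lemma inter_of (T : finType) (e : rel T) X Y c d :
  [disjoint X & Y] ->
  c \in chords e X Y -> d \in chords e X Y ->
  pX X c < pX X d -> qY Y d < qY Y c ->
  interlacing X Y c d && interlacing X Y d c.
Proof.
move=> dis /chord_mem[c1 c2 _] /chord_mem[d1 d2 _] hp hq.
have nXY : forall u v, u \in X -> v \in Y -> u != v.
  move=> u v uX vY; apply/eqP=> uv; subst v.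
  by rewrite (disjointFr dis uX) in vY.
have h1 : c.1 != d.1 by apply/eqP=> E; move: hp; rewrite /pX E ltnn.
have h2 : c.2 != d.2 by apply/eqP=> E; move: hq; rewrite /qY E ltnn.
have ncv : no_common_vertex c d.
  by rewrite /no_common_vertex h1 h2 nXY // eq_sym nXY.
have ncv' : no_common_vertex d c.
  by rewrite /no_common_vertex (eq_sym d.1 c.1) (eq_sym d.2 c.2) h1 h2 nXY // eq_sym nXY.
rewrite /interlacing /parallel ncv ncv' /= /aboveX /aboveY.
move: hp hq; rewrite /pX /qY => hp hq.
apply/andP; split; apply/negP; case/orP=> /andP[h3 h4];
  first [by move: (ltn_trans h4 hq); rewrite ltnn | by move: (ltn_trans h3 hp); rewrite ltnn
        | by move: (ltn_trans hq h4); rewrite ltnn | by move: (ltn_trans hp h3); rewrite ltnn].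
Qed.

Lemma pair_ok (T : finType) (e : rel T) X Y c d :
  [disjoint X & Y] ->
  c \in chords e X Y -> d \in chords e X Y ->
  pX X c < pX X d -> qY Y c <= qY Y d ->
  parallel X Y c d || (c.2 == d.2).
Proof.
move=> dis /chord_mem[c1 c2 _] /chord_mem[d1 d2 _] hp hq.
have nXY : forall u v, u \in X -> v \in Y -> u != v.
  move=> u v uX vY; apply/eqP=> uv; subst v.
  by rewrite (disjointFr dis uX) in vY.
have h1 : c.1 != d.1 by apply/eqP=> E; move: hp; rewrite /pX E ltnn.
case: (ltngtP (qY Y c) (qY Y d)) hq => // hq _; last first.
  by rewrite (index_inj c.2 c2 d2 hq) eqxx orbT.
have h2 : c.2 != d.2 by apply/eqP=> E; move: hq; rewrite /qY E ltnn.
rewrite /parallel /no_common_vertex h1 h2 nXY // eq_sym nXY //=.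
by rewrite /aboveX /aboveY -/(pX X c) -/(pX X d) -/(qY Y c) -/(qY Y d) hp hq.
Qed.

Lemma greedy (T : finType) (e : rel T) X Y (n : nat) (S : {set T * T}) :
  {in chords e X Y &, injective (pX X)} ->
  S \subset chords e X Y -> #|S| <= n ->
  exists (A : seq (T * T)) (P : seq ((T * T) * (T * T))),
   [/\ all (fun c => c \in S) A,
       pairwise (fun c d => (pX X c < pX X d) && (qY Y d < qY Y c)) A,
       all (fun u => [&& u.1 \in S, u.2 \in S, pX X u.1 < pX X u.2 & qY Y u.1 <= qY Y u.2]) P,
       pairwise (fun u v => (pX X u.2 < pX X v.1) && (qY Y v.2 < qY Y u.1)) P
     & #|S| <= size A + \sum_(u <- P) (pX X u.2 - pX X u.1)].
Proof.
move=> pinj.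
elim: n S => [|n IH] S sub hS.
  exists [::], [::]; split => //; rewrite big_nil; lia.
case: (set_0Vmem S) => [-> | [c0 c0S]].
  by exists [::], [::]; split => //; rewrite cards0.
case: (@arg_minnP _ c0 (fun c => c \in S) (pX X) c0S) => a aS amin.
pose B := (fun c => (c \in S) && (qY Y a <= qY Y c)).
have aB : B a by rewrite /B /= aS leqnn.
case: (@arg_maxnP _ a B (pX X) aB) => b /andP[bS qab] bmax.
have pab : pX X a <= pX X b by apply: bmax; rewrite /B /= aS leqnn.
set S' := [set c in S | pX X b < pX X c].
have sub' : S' \subset chords e X Y.
  by apply: subset_trans sub; apply/subsetP => c; rewrite inE => /andP[].
have qS' : forall c, c \in S' -> qY Y c < qY Y a.
  move=> c; rewrite inE => /andP[cS pc]; rewrite ltnNge; apply/negP => qc.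
  have := bmax c; rewrite /B /= cS qc /= => /(_ isT); lia.
have pS' : forall c, c \in S' -> pX X b < pX X c.
  by move=> c; rewrite inE => /andP[].
have cardS : #|S| <= (pX X b - pX X a).+1 + #|S'|.
  rewrite -(cardsID [set c | pX X b < pX X c] S).
  have -> : S :&: [set c | pX X b < pX X c] = S'.
    by apply/setP => c; rewrite !inE.
  rewrite addnC leq_add2r.
  set D := S :\: _.
  rewrite cardE -(size_map (pX X)) -(size_iota (pX X a) (pX X b - pX X a).+1).
  apply: uniq_leq_size.
    rewrite map_inj_in_uniq ?enum_uniq // => u v.
    rewrite !mem_enum => uD vD; apply: pinj; apply: (subsetP sub);
      by move: uD vD; rewrite !inE => /andP[_ ?] /andP[_ ?].
  move=> k /mapP [c]; rewrite mem_enum => cD ->; move: cD; rewrite !inE => /andP[pcb cS].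
  rewrite mem_iota; have := amin c cS; lia.
have hS' : #|S'| <= n.
  have : #|S'| < #|S|.
    apply: proper_card; apply/properP; split.
      by apply/subsetP => c; rewrite inE => /andP[].
    by exists a => //; rewrite inE aS /=; lia.
  lia.
have [A' [P' [A'S pA' P'S pP' cA']]] := IH S' sub' hS'.
have A'S' : forall c, c \in A' -> c \in S' by move=> c /(allP A'S).
have P'S' : forall u, u \in P' -> (u.1 \in S') && (u.2 \in S').
  by move=> u /(allP P'S) /and4P[-> ->].
exists (a :: A'), (if pX X a < pX X b then (a, b) :: P' else P'); split.
- by rewrite /= aS /=; apply/allP => c /A'S'; rewrite inE => /andP[].
- rewrite pairwise_cons pA' andbT; apply/allP => c /A'S' cS'.
  by rewrite (qS' c cS') andbT (leq_ltn_trans pab (pS' c cS')).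
- case: ifP => hab /=; last first.
    by apply/allP => u /(allP P'S) /and4P[]; rewrite !inE => /andP[-> _] /andP[-> _] -> ->.
  rewrite aS bS hab qab /=.
  by apply/allP => u /(allP P'S) /and4P[]; rewrite !inE => /andP[-> _] /andP[-> _] -> ->.
- case: ifP => hab //; rewrite pairwise_cons pP' andbT.
  by apply/allP => u /P'S' /andP[u1 u2] /=; rewrite (pS' _ u1) (qS' _ u2).
- case: ifP => hab /=; [rewrite big_cons /= | move/negbT: hab => hab];
  move: cardS cA' hab pab; set u := \sum_(_ <- _) _;
  move: (#|S|) (#|S'|) (size A') u (pX X a) (pX X b) => s1 s2 s3 s4 s5 s6 h1 h2 h3 h4; lia.
Qed.

Unset Implicit Arguments.
Set Strict Implicit.

Theorem lemma4p3 (T : finType) (e : rel T) (X Y : seq T) :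
  simple_graph e ->
  section_pair e X Y ->
  (forall x : T, x \in X -> #|[set c in chords e X Y | c.1 == x]| <= 1) ->
  let m := #|chords e X Y| in
  (exists F : {set T * T},
      [/\ F \subset chords e X Y,
          m <= 2 * #|F| &
          {in F &, forall c1 c2, c1 != c2 -> interlacing X Y c1 c2}])
  \/
  (exists (t : nat) (ep ep' : nat -> T * T),
      [/\ forall i, i < t ->
            [/\ ep i \in chords e X Y, ep' i \in chords e X Y & ep i != ep' i],
          forall i, i < t ->
            parallel X Y (ep i) (ep' i) || ((ep i).2 == (ep' i).2),
          forall i j, i < j -> j < t ->
            [/\ interlacing X Y (ep i) (ep j), interlacing X Y (ep i) (ep' j),
                interlacing X Y (ep' i) (ep j) & interlacing X Y (ep' i) (ep' j)]
        & m <= 4 * \sum_(i < t) dX X (ep i).1 (ep' i).1]).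
Proof.
move=> _ [_ _ dis] uniqx m.
have pinj : {in chords e X Y &, injective (pX X)}.
  move=> c d cC dC hp.
  have [c1 _ _] := chord_mem cC; have [d1 _ _] := chord_mem dC.
  have E : c.1 = d.1 by apply: (index_inj c.1 c1 d1 hp).
  have /card_le1_eqP H := uniqx _ c1.
  by apply: H; rewrite inE ?cC ?dC /= ?E eqxx.
have G := @greedy T e X Y #|chords e X Y| (chords e X Y) pinj (subxx _) (leqnn _).
case: G => A [P [AS pA PS pP cA]].
pose r := fun c d : T * T => (pX X c < pX X d) && (qY Y d < qY Y c).
have inter : forall c d, c \in chords e X Y -> d \in chords e X Y -> r c d ->
    interlacing X Y c d && interlacing X Y d c.
  by move=> c d cC dC /andP[h1 h2]; exact: (inter_of dis cC dC h1 h2).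
case: (leqP m (2 * size A)) => hA.
  left; exists [set c in A].
  have uA : uniq A by apply: (pairwise_uniq (r := r)) => // c; rewrite /r ltnn.
  split.
  - by apply/subsetP => c; rewrite inE => /(allP AS).
  - by rewrite cardsE (card_uniqP uA).
  - move=> c1 c2; rewrite !inE => c1A c2A ne.
    have c1C := allP AS _ c1A; have c2C := allP AS _ c2A.
    have ine : index c1 A != index c2 A.
      by apply: contra ne => /eqP E; rewrite -(nth_index c1 c1A) E nth_index.
    have := pairwiseP c1 pA; rewrite -/r => H.
    case: (ltngtP (index c1 A) (index c2 A)) ine => // hi _.
      have := H _ _ _ _ hi; rewrite !inE !index_mem !nth_index // => /(_ c1A c2A) h.
      by case/andP: (inter _ _ c1C c2C h).
    have := H _ _ _ _ hi; rewrite !inE !index_mem !nth_index // => /(_ c2A c1A) h.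
    by case/andP: (inter _ _ c2C c1C h).
right.
have [c0 c0C] : exists c0, c0 \in chords e X Y.
  by apply/card_gt0P; rewrite -/m; lia.
pose u i := nth (c0, c0) P i.
have uP : forall i, i < size P -> [&& (u i).1 \in chords e X Y, (u i).2 \in chords e X Y,
    pX X (u i).1 < pX X (u i).2 & qY Y (u i).1 <= qY Y (u i).2].
  by move=> i hi; apply: (allP PS); apply: mem_nth.
exists (size P), (fun i => (u i).1), (fun i => (u i).2); split.
- move=> i /uP /and4P[h1 h2 h3 _]; split => //.
  by apply: contraTneq h3 => ->; rewrite ltnn.
- by move=> i /uP /and4P[h1 h2 h3 h4]; exact: (pair_ok dis h1 h2 h3 h4).
- move=> i j hij hj.
  have hi : i < size P by apply: ltn_trans hj.
  have := pairwiseP (c0, c0) pP; rewrite -/u => H.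
  have := H i j; rewrite !inE => /(_ hi hj hij) /andP[k1 k2].
  move: (uP i hi) (uP j hj) => /and4P[a1 a2 a3 a4] /and4P[b1 b2 b3 b4].
  have t1 : pX X (u i).1 < pX X (u j).1 := ltn_trans a3 k1.
  have t2 : pX X (u i).1 < pX X (u j).2 := ltn_trans t1 b3.
  have t3 : pX X (u i).2 < pX X (u j).2 := ltn_trans k1 b3.
  have s1 : qY Y (u j).2 < qY Y (u i).2 := leq_trans k2 a4.
  have s2 : qY Y (u j).1 < qY Y (u i).1 := leq_ltn_trans b4 k2.
  have s3 : qY Y (u j).1 < qY Y (u i).2 := leq_trans s2 a4.
  split.
  + by case/andP: (inter _ _ a1 b1 (introT andP (conj t1 s2))).
  + by case/andP: (inter _ _ a1 b2 (introT andP (conj t2 k2))).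
  + by case/andP: (inter _ _ a2 b1 (introT andP (conj k1 s3))).
  + by case/andP: (inter _ _ a2 b2 (introT andP (conj t3 s1))).
- have hsum : \sum_(v <- P) (pX X v.2 - pX X v.1)
      <= \sum_(i < size P) dX X (u i).1.1 (u i).2.1.
    rewrite (big_nth (c0, c0)) big_mkord; apply: leq_sum => i _.
    by rewrite /dX -/(pX X (u i).1) -/(pX X (u i).2) leq_addl.
  move: cA hA hsum; rewrite -/m.
  move: (\sum_(v <- P) _) (\sum_(i < size P) _) (size A) m => a b c d h1 h2 h3.
  lia.
Qed.
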